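(* Let $\mathcal E$ be any partition of $E^1$ into nonempty parts. Then $$\sum_{\{U,W\}\in\mathsf P_2}\operatorname{sgn}_{\mathcal E}\prod_{i=1}^{|\mathcal E|}\chi^{\mathsf u_i,\mathsf v_i}=(-1)^{1-|\mathcal E|}(-\Psi)^{|\mathcal E|-N}\sum_{D\in\mathcal D^0|_{\mathcal E}}(-2)^{c_2^2(D)-1}\prod_{(a,b)\text{ chord of }D}\chi^{a,b}.$$
   Context: Graph polynomials. All graphs are finite, may have multiple edges and self-loops, and each edge $e$ has a fixed direction from $\partial_-(e)$ to $\partial_+(e)$. Each edge $e$ carries a variable $\alpha_e$; for $S\subseteq E_G$ put $\alpha_S=\prod_{e\in S}\alpha_e$. $h_1(G)$ is the first Betti number. The Kirchhoff polynomial of a connected graph is $\Psi_G=\sum_T\alpha_{E_G\setminus T}$, summed over spanning trees $T$; for a disconnected graph it is the product over its components. $G/\!\!/S$ denotes contraction of all edges of $S$. A simple cycle $C$ is a connected subgraph in which every vertex has degree $2$; fix one of its two cyclic orientations and set $o_C(e)=+1$ if $e\in C$ is directed along it, $-1$ if against it, and $0$ if $e\notin C$. For $e,f\in E_G$ the cycle polynomial is $\chi_G^{e,f}=\sum_C o_C(e)o_C(f)\Psi_{G/\!\!/C}$, summed over all simple cycles $C$. For words $\mathsf u=u_1\cdots u_k$ and $\mathsf v=v_1\cdots v_k$ whose letters are edges of $G$, with $1\le k\le h_1(G)$, the Dodgson cycle polynomial is $\chi_G^{\mathsf u,\mathsf v}=\Psi_G^{1-k}\sum_{\sigma\in S_k}\operatorname{sgn}(\sigma)\prod_{i=1}^k\chi_G^{u_i,v_{\sigma(i)}}=\Psi_G^{1-k}\det(\chi_G^{u_i,v_j})_{i,j}$.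 Chord diagrams. Let $\Gamma$ be a connected graph with $N:=h_1(\Gamma)\ge1$, and write $\Psi=\Psi_\Gamma$, $\chi^{e,f}=\chi_\Gamma^{e,f}$, $\chi^{\mathsf u,\mathsf v}=\chi_\Gamma^{\mathsf u,\mathsf v}$. Let $D_0$ be a chord diagram without chords: a disjoint union of $\ell\ge1$ cycles (base cycles) of lengths $2n_1,\dots,2n_\ell$, with $n_i\ge1$ and $\sum n_i=N$. A base cycle of length $2$ consists of two parallel edges. Its edges (base edges) are coloured $1$ and $2$ alternately along each base cycle, so every vertex meets exactly one base edge of each colour. Its $2N$ vertices are labelled by pairwise distinct edges of $\Gamma$; $e_w$ denotes the label of vertex $w$. Let $E^1$ and $E^2$ be the sets of base edges of colour $1$ and $2$; each is a perfect matching of $V(D_0)$. A chord is an extra edge (colour $0$) joining two distinct vertices. $\mathcal D^0$ is the set of diagrams obtained from $D_0$ by adding $N$ chords forming a perfect matching of $V(D_0)$. For $D\in\mathcal D^0$, $c_2^2(D)$ is the number of connected components that are cycles in the subgraph formed by all chords and all colour-$2$ base edges (a chord parallel to a colour-$2$ base edge counts as a cycle of length $2$). For a chord $(a,b)$ write $\chi^{a,b}:=\chi^{e_a,e_b}$. Words. $\mathsf P_2$ is the set of unordered pairs $\{U,W\}$ of disjoint sets with $U\cup W=V(D_0)$ and $|U|=|W|=N$, such that every colour-$2$ base edge has one endpoint in $U$ and one in $W$. Fix an enumeration $(a_1,b_1),\dots,(a_N,b_N)$ of $E^2$. The representative of $\{U,W\}$ is the pair of words $(\mathsf u_{\rm id},\mathsf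 v_{\rm id})$ of length $N$ whose $k$-th letters are $e_{a_k}$ and $e_{b_k}$: the letter whose vertex lies in $U$ goes into $\mathsf u_{\rm id}$ and the other into $\mathsf v_{\rm id}$. Partitions. Let $\mathcal E=\{E_1,\dots,E_m\}$ be a partition of $E^1$ into $m=|\mathcal E|$ nonempty parts, listed in any order, and let $V_i$ be the set of endpoints of edges of $E_i$. For $\{U,W\}\in\mathsf P_2$ with representative $(\mathsf u_{\rm id},\mathsf v_{\rm id})$, let $\mathsf u_i$ (resp. $\mathsf v_i$) be the subword of $\mathsf u_{\rm id}$ (resp. $\mathsf v_{\rm id}$) consisting of the letters $e_w$ with $w\in V_i$, in their original order. - If $|\mathsf u_i|=|\mathsf v_i|$ for all $i$, set $\operatorname{sgn}_{\mathcal E}=\operatorname{sgn}(\sigma)\operatorname{sgn}(\sigma')$, where $\sigma,\sigma'\in S_N$ are the permutations of letter positions with $\mathsf u_1\cdots\mathsf u_m=\sigma(\mathsf u_{\rm id})$ and $\mathsf v_1\cdots\mathsf v_m=\sigma'(\mathsf v_{\rm id})$. - Otherwise set $\operatorname{sgn}_{\mathcal E}=0$, and the corresponding summand is $0$. $\mathcal D^0|_{\mathcal E}$ is the set of $D\in\mathcal D^0$ all of whose chords join two vertices lying in the same $V_i$. *)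

(* Defs.v *)
From HB Require Import structures.
From mathcomp Require Import all_boot all_order all_algebra all_fingroup.
Set Implicit Arguments. Unset Strict Implicit. Unset Printing Implicit Defensive.
Import GRing.Theory.
Local Open Scope ring_scope.

(* Graphs: vertex type V, edge type E, each edge e directed from       *)
(* src e to tgt e (multiple edges and self-loops allowed).  A          *)
(* subgraph / graph on the same vertex type is given by an edge set S. *)
Section Graph.
Variables (V E : finType) (src tgt : E -> V).

Definition adj (S : {set E}) : rel V := fun u v =>
  [exists e in S, ((src e == u) && (tgt e == v)) || ((src e == v) && (tgt e == u))].

Definition is_endpoint (S : {set E}) (v : V) : bool :=
  [exists e in S, (src e == v) || (tgt e == v)].

(* degree in the subgraph S (a self-loop counts twice) *)
Definition degree (S : {set E}) (v : V) : nat :=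
  (#|[set e in S | src e == v]| + #|[set e in S | tgt e == v]|)%N.

Definition simple_cycle (C : {set E}) : bool :=
  [&& C != set0,
      [forall v, is_endpoint C v ==> (degree C v == 2%N)] &
      [forall u, forall v, (is_endpoint C u && is_endpoint C v) ==> connect (adj C) u v]].

Definition acyclic (T : {set E}) : bool :=
  [forall C : {set E}, (C \subset T) ==> ~~ simple_cycle C].

Definition spanning_forest (S T : {set E}) : bool :=
  [&& T \subset S, acyclic T &
      [forall u, forall v, connect (adj S) u v ==> connect (adj T) u v]].

(* Kirchhoff polynomial (evaluated at alpha); for a disconnected graph  *)
(* this is the product over components of the spanning-tree sums.       *)
Definition kirchhoff (R : comNzRingType) (alpha : E -> R) (S : {set E}) : R :=
  \sum_(T : {set E} | spanning_forest S T) \prod_(e in S :\: T) alpha e.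

Definition ncomp (S : {set E}) : nat :=
  #|[set [set y | connect (adj S) x y] | x : V]|.

Definition betti1 : nat := (#|E| + ncomp setT - #|V|)%N.

Definition connected_graph : bool :=
  [forall u, forall v, connect (adj setT) u v].

Definition cyc_orientation (C : {set E}) (o : {ffun E -> bool}) : bool :=
  [forall v, is_endpoint C v ==>
     (#|[set e in C | (if o e then src e else tgt e) == v]| == 1%N) &&
     (#|[set e in C | (if o e then tgt e else src e) == v]| == 1%N)].

Definition orient_of (C : {set E}) : {ffun E -> bool} :=
  odflt [ffun => true] [pick o | cyc_orientation C o].

Definition ocyc (R : nzRingType) (C : {set E}) (e : E) : R :=
  if e \in C then (if orient_of C e then 1 else -1) else 0.
End Graph.

(* vertex map of the contraction G//C: each vertex goes to the root of *)
(* its connected component in the subgraph C                           *)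
Definition contr_map (V E : finType) (src tgt : E -> V) (C : {set E}) : V -> V :=
  fingraph.root (adj src tgt C).

Definition kirchhoff_contr (V E : finType) (src tgt : E -> V) (R : comNzRingType)
  (alpha : E -> R) (C : {set E}) : R :=
  kirchhoff (contr_map src tgt C \o src) (contr_map src tgt C \o tgt) alpha (~: C).

Definition Psi (V E : finType) (src tgt : E -> V) (R : comNzRingType) (alpha : E -> R) : R :=
  kirchhoff src tgt alpha setT.

Definition cyclepoly (V E : finType) (src tgt : E -> V) (R : comNzRingType)
  (alpha : E -> R) (e f : E) : R :=
  \sum_(C : {set E} | simple_cycle src tgt C)
     ocyc src tgt R C e * ocyc src tgt R C f * kirchhoff_contr src tgt alpha C.

Definition dodgson (V E : finType) (src tgt : E -> V) (R : fieldType)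
  (alpha : E -> R) (u v : seq E) : R :=
  let rows := [seq [seq cyclepoly src tgt alpha x y | y <- v] | x <- u] in
  Psi src tgt alpha ^ (1 - (size u)%:Z) *
  \det (\matrix_(i < size u, j < size u) nth 0 (nth [::] rows i) j).

Definition perfect_matching (W : finType) (M : {set {set W}}) : bool :=
  partition M [set: W] && [forall B in M, #|B| == 2%N].

Section Chords.
Variables (W : finType) (N : nat) (a b : 'I_N -> W) (E1 E2 : {set {set W}}).

(* P_2, as a set of unordered pairs {U, ~: U} *)
Definition P2 : {set {set {set W}}} :=
  [set p : {set {set W}} | [exists U : {set W},
     [&& p == [set U; ~: U], #|U| == N, #|~: U| == N &
         [forall e in E2, #|e :&: U| == 1%N]]]].

Definition pair_U (p : {set {set W}}) : {set W} := odflt set0 [pick X in p].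

Definition uvert (U : {set W}) (k : 'I_N) : W := if a k \in U then a k else b k.
Definition vvert (U : {set W}) (k : 'I_N) : W := if a k \in U then b k else a k.

(* positions (in u_id, resp. v_id) of the letters of u_i, resp. v_i, *)
(* where V_i = cover B                                               *)
Definition upos (U : {set W}) (B : {set {set W}}) : seq 'I_N :=
  [seq k <- enum 'I_N | uvert U k \in cover B].
Definition vpos (U : {set W}) (B : {set {set W}}) : seq 'I_N :=
  [seq k <- enum 'I_N | vvert U k \in cover B].

Definition seq_sign (R : nzRingType) (s : seq 'I_N) : R :=
  match [pick sg : 'S_N | [forall i : 'I_N, nth i s i == sg i]] with
  | Some sg => (-1) ^+ odd_perm sg
  | None => 0
  end.

(* sgn_E for the partition P (parts listed as enum P) *)
Definition sgnE (R : nzRingType) (P : {set {set {set W}}}) (U : {set W}) : R :=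
  if [forall B in P, size (upos U B) == size (vpos U B)] then
    seq_sign R (flatten [seq upos U B | B <- enum P]) *
    seq_sign R (flatten [seq vpos U B | B <- enum P])
  else 0.

(* c_2^2(D) for the chord set M: components of (W, M + E2) that are     *)
(* cycles, i.e. connected with every vertex of degree 2                  *)
Definition chord2_rel (M : {set {set W}}) : rel W := fun x y =>
  [exists c in M :|: E2, (x \in c) && (y \in c)].

Definition c22 (M : {set {set W}}) : nat :=
  #|[set K in [set [set y | connect (chord2_rel M) x y] | x : W] |
     [forall x in K, (#|[set c in M | x \in c]| + #|[set c in E2 | x \in c]|)%N == 2%N]]|.
End Chords.

Definition chord_chi (V E : finType) (src tgt : E -> V) (R : comNzRingType)
  (alpha : E -> R) (W : finType) (lab : W -> E) (c : {set W}) : R :=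
  match [pick x in c] with
  | Some x => match [pick y in c :\ x] with
              | Some y => cyclepoly src tgt alpha (lab x) (lab y)
              | None => 0 end
  | None => 0
  end.

(* Main.v *)
Require Import Defs.
From HB Require Import structures.
From mathcomp Require Import all_boot all_order all_algebra all_fingroup.
From mathcomp Require Import zify ring.
Import GRing.Theory.
Module Part12.
Set Implicit Arguments. Unset Strict Implicit. Unset Printing Implicit Defensive.

Section Matching.
Variable W : finType.

Definition partner (Q : {set {set W}}) (x : W) : W :=
  odflt x [pick y in pblock Q x :\ x].

Lemma card_pairI1 (x y : W) (U : {set W}) : x != y ->
  (#|[set x; y] :&: U| == 1%N) = ((x \in U) != (y \in U)).
Proof.
move=> nxy.
have E : [set x; y] :&: U = (if x \in U then [set x] else set0) :|: (if y \in U then [set y] else set0).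
  apply/setP => z; rewrite !inE.
  have [zx|nzx] := eqVneq z x; have [zy|nzy] := eqVneq z y.
  - by move: nxy; rewrite -zx -zy eqxx.
  - by rewrite zx; case: (x \in U); case: (y \in U); rewrite !inE ?eqxx ?(negbTE nxy).
  - by rewrite zy; case: (x \in U); case: (y \in U); rewrite !inE ?eqxx // eq_sym (negbTE nxy).
  - by case: (x \in U); case: (y \in U); rewrite !inE ?(negbTE nzx) ?(negbTE nzy).
rewrite E; case xU: (x \in U); case yU: (y \in U) => /=.
- by rewrite cards2 nxy.
- by rewrite setU0 cards1.
- by rewrite set0U cards1.
- by rewrite setU0 cards0.
Qed.


Variable Q : {set {set W}}.
Hypothesis HQ : perfect_matching Q.

Lemma pm_part : partition Q [set: W].
Proof. by case/andP: HQ. Qed.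

Lemma pm_triv : trivIset Q.
Proof. by case/and3P: pm_part. Qed.

Lemma pm_card2 c : c \in Q -> #|c| = 2%N.
Proof. by case/andP: HQ => _ /forall_inP H /H /eqP. Qed.

Lemma pm_cover x : x \in cover Q.
Proof. by case/and3P: pm_part => /eqP -> _ _; rewrite inE. Qed.

Lemma pm_pblock_in x : pblock Q x \in Q.
Proof. exact: pblock_mem (pm_cover x). Qed.

Lemma pm_mem_pblock x : x \in pblock Q x.
Proof. by rewrite mem_pblock pm_cover. Qed.

Lemma pm_def c x : c \in Q -> x \in c -> pblock Q x = c.
Proof. by move=> cQ xc; apply: def_pblock pm_triv cQ xc. Qed.

Lemma partner_spec x : partner Q x \in pblock Q x :\ x.
Proof.
rewrite /partner; case: pickP => [y -> //|H] /=.
have := pm_card2 (pm_pblock_in x).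
rewrite (cardsD1 x) pm_mem_pblock (eq_card0 H).
by [].
Qed.

Lemma partner_neq x : partner Q x != x.
Proof. by have := partner_spec x; rewrite !inE => /andP[]. Qed.

Lemma partner_in x : partner Q x \in pblock Q x.
Proof. by have := partner_spec x; rewrite !inE => /andP[]. Qed.

Lemma pblock_pair x : pblock Q x = [set x; partner Q x].
Proof.
apply/eqP; rewrite eq_sym eqEcard pm_card2 ?pm_pblock_in // cards2.
rewrite eq_sym partner_neq andbT; apply/subsetP => z; rewrite !inE.
by case/orP => /eqP ->; rewrite ?pm_mem_pblock ?partner_in.
Qed.

Lemma pblock_partner x : pblock Q (partner Q x) = pblock Q x.
Proof. by apply: pm_def (pm_pblock_in x) (partner_in x). Qed.

Lemma partnerK : involutive (partner Q).
Proof.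
move=> x; have := partner_in (partner Q x).
rewrite pblock_partner pblock_pair !inE => /orP[] /eqP // E.
by have := partner_neq (partner Q x); rewrite E eqxx.
Qed.

Lemma partner_inj : injective (partner Q).
Proof. exact: inv_inj partnerK. Qed.

Lemma pm_blockE c : c \in Q -> forall x, x \in c -> c = [set x; partner Q x].
Proof. by move=> cQ x xc; rewrite -pblock_pair (pm_def cQ xc). Qed.

Lemma pm_block_ex c : c \in Q -> exists x, c = [set x; partner Q x].
Proof.
move=> cQ; have : c != set0 by rewrite -card_gt0 pm_card2.
by case/set0Pn => x xc; exists x; apply: pm_blockE.
Qed.

Lemma pm_mem x y : (y \in pblock Q x) = (y == x) || (y == partner Q x).
Proof. by rewrite pblock_pair !inE. Qed.

Lemma pm_okE (U : {set W}) :
  [forall c in Q, #|c :&: U| == 1%N] = [forall x, (x \in U) != (partner Q x \in U)].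
Proof.
apply/forall_inP/forallP => H x.
  by rewrite -card_pairI1 ?(eq_sym x) ?partner_neq // -pblock_pair H ?pm_pblock_in.
by move=> xQ; case: (pm_block_ex xQ) => y ->; rewrite card_pairI1 ?(eq_sym y) ?partner_neq.
Qed.

End Matching.

Section Coloring.
Variables (W : finType) (Q1 Q2 : {set {set W}}).
Hypotheses (HQ1 : perfect_matching Q1) (HQ2 : perfect_matching Q2).

Local Notation e := (partner Q1).
Local Notation m := (partner Q2).
Local Notation r := (chord2_rel Q1 Q2).

Lemma rel_char x y : r x y = [|| y == x, y == e x | y == m x].
Proof.
apply/existsP/idP => [[c /andP[]]|].
  rewrite inE => /orP[] cQ /andP[xc yc].
    by move: yc; rewrite (pm_blockE HQ2 cQ xc) !inE => /orP[] ->; rewrite ?orbT.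
  by move: yc; rewrite (pm_blockE HQ1 cQ xc) !inE => /orP[] ->; rewrite ?orbT.
case/or3P => /eqP ->.
- by exists (pblock Q2 x); rewrite inE pm_pblock_in // pm_mem_pblock.
- by exists (pblock Q1 x); rewrite inE pm_pblock_in // ?orbT pm_mem_pblock // partner_in.
- by exists (pblock Q2 x); rewrite inE pm_pblock_in // pm_mem_pblock // partner_in.
Qed.

Lemma r_sym : symmetric r.
Proof.
move=> x y; rewrite /chord2_rel.
by apply/existsP/existsP => -[c /andP[cQ /andP[h1 h2]]]; exists c; rewrite cQ h1 h2.
Qed.

Lemma r_csym : connect_sym r.
Proof. exact: sym_connect_sym r_sym. Qed.

Definition rho (x : W) : W := m (e x).

Lemma rho_inj : injective rho.
Proof. by move=> x y /(partner_inj HQ2) /(partner_inj HQ1). Qed.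

Lemma no_iter n x : iter n rho x != e x.
Proof.
elim/ltn_ind: n x => [[|[|k]]] IH x /=.
- by rewrite eq_sym partner_neq.
- by rewrite /rho partner_neq.
apply/eqP => H.
have : iter k rho (rho x) == e (rho x); last by rewrite (negbTE (IH k _ _)).
have H1 : m (e (iter k rho (rho x))) = e x.
  by rewrite -H -iterSr.
have H2 : e (iter k rho (rho x)) = m (e x) by rewrite -H1 (partnerK HQ2).
by apply/eqP; rewrite -[e (rho x)]/(e (m (e x))) -H2 (partnerK HQ1).
Qed.

Lemma rho_csym : connect_sym (frel rho).
Proof. by move=> x y; apply: (fconnect_sym rho_inj). Qed.

Lemma root_rho x : froot rho (rho x) = froot rho x.
Proof. by apply/esym/eqP; rewrite (root_connect rho_csym) fconnect1. Qed.

Lemma root_e_neq x : froot rho x != froot rho (e x).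
Proof.
rewrite (root_connect rho_csym); apply/negP => /iter_findex H.
by have := no_iter (findex rho x (e x)) x; rewrite H eqxx.
Qed.

Definition col0 : {set W} :=
  [set x | (enum_rank (froot rho x) < enum_rank (froot rho (e x)))%N].

Definition properb (U : {set W}) :=
  [forall x, (x \in U) != (e x \in U)] && [forall x, (x \in U) != (m x \in U)].

Lemma ltn_xor (i j : nat) : i != j -> (i < j)%N != (j < i)%N.
Proof. by case: ltngtP. Qed.

Lemma col0_proper : properb col0.
Proof.
have Hne x : (enum_rank (froot rho x) : nat) != enum_rank (froot rho (e x)).
  by apply/negP => /eqP/val_inj/enum_rank_inj/eqP; apply/negP; apply: root_e_neq.
apply/andP; split; apply/forallP => x; rewrite /col0 !inE.
  by rewrite (partnerK HQ1); apply: ltn_xor.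
have E1 : froot rho (m x) = froot rho (e x).
  by rewrite -[in RHS]root_rho /rho (partnerK HQ1).
have E2 : froot rho (e (m x)) = froot rho x.
  by rewrite -[in LHS]root_rho /rho (partnerK HQ1) (partnerK HQ2).
by rewrite E1 E2; apply: ltn_xor.
Qed.

Definition cls (x : W) : {set W} := [set y | connect r x y].
Definition comps : {set {set W}} := [set cls x | x : W].

Lemma cls_eq x y : connect r x y -> cls x = cls y.
Proof.
by move=> H; apply/setP => z; rewrite !inE (same_connect r_csym H).
Qed.

Lemma cls_eqP x y : (cls x == cls y) = connect r x y.
Proof.
apply/eqP/idP => [E|]; last exact: cls_eq.
have : y \in cls y by rewrite inE connect0.
by rewrite -E inE.
Qed.

Lemma mem_cover_cls (S : {set {set W}}) x : S \subset comps ->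
  (x \in cover S) = (cls x \in S).
Proof.
move=> sS; apply/bigcupP/idP => [[K KS xK]|xS]; last by exists (cls x); rewrite // inE connect0.
have := subsetP sS K KS; case/imsetP => z _ Kz.
by move: xK KS; rewrite Kz inE => /cls_eq ->.
Qed.

Definition symd (A B : {set W}) : {set W} := [set x | (x \in A) != (x \in B)].

Lemma in_symd A B x : (x \in symd A B) = ((x \in A) != (x \in B)).
Proof. by rewrite inE. Qed.

Lemma symdK A B : symd A (symd A B) = B.
Proof. by apply/setP => x; rewrite !inE; case: (x \in A); case: (x \in B). Qed.

Lemma proper_closedE (U : {set W}) (C : {set W}) :
  (forall x y, r x y -> (x \in C) = (y \in C)) -> properb U -> properb (symd U C).
Proof.
move=> cC /andP[/forallP H1 /forallP H2]; apply/andP; split; apply/forallP => x; rewrite !inE.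
  rewrite -(cC x (e x)); last by rewrite rel_char eqxx orbT.
  by move: (H1 x); case: (x \in U); case: (e x \in U); case: (x \in C).
rewrite -(cC x (m x)); last by rewrite rel_char eqxx !orbT.
by move: (H2 x); case: (x \in U); case: (m x \in U); case: (x \in C).
Qed.

Lemma proper_diff_closed U V : properb U -> properb V ->
  forall x y, r x y -> (x \in symd U V) = (y \in symd U V).
Proof.
move=> /andP[/forallP H1 /forallP H2] /andP[/forallP H3 /forallP H4] x y.
rewrite rel_char !inE => /or3P[] /eqP ->; first by [].
  by move: (H1 x) (H3 x); case: (x \in U); case: (e x \in U); case: (x \in V); case: (e x \in V).
by move: (H2 x) (H4 x); case: (x \in U); case: (m x \in U); case: (x \in V); case: (m x \in V).
Qed.

Lemma card_proper : #|[set U | properb U]| = (2 ^ #|comps|)%N.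
Proof.
rewrite -card_powerset.
have -> : [set U | properb U] = [set symd col0 (cover S) | S in powerset comps].
  apply/setP => U; rewrite inE; apply/idP/imsetP => [pU|[S]].
    exists [set cls x | x in symd col0 U].
      by rewrite inE; apply/subsetP => K /imsetP[x _ ->]; apply: imset_f.
    apply/setP => x; rewrite [in RHS]in_symd mem_cover_cls; last by apply/subsetP => K /imsetP[z _ ->]; apply: imset_f.
    rewrite -[in LHS](symdK col0 U) [in LHS]in_symd; congr (_ != _).
    apply/idP/imsetP => [xs|[z zs /eqP]]; first by exists x.
    rewrite cls_eqP => /(closed_connect (proper_diff_closed col0_proper pU)).
    by move=> ->.
  rewrite inE => sS ->; apply: proper_closedE col0_proper => x y rxy.
  by rewrite !mem_cover_cls // (@cls_eq x y) // connect1.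
apply: card_in_imset => S1 S2; rewrite !inE => s1 s2 E.
have E' : cover S1 = cover S2 by rewrite -(symdK col0 (cover S1)) E symdK.
apply/setP => K; case: (boolP (K \in comps)) => [/imsetP[z _ ->]|nK].
  by rewrite -!mem_cover_cls ?E'.
by apply/idP/idP => KS; [move: (subsetP s1 K KS) | move: (subsetP s2 K KS)]; rewrite (negbTE nK).
Qed.

Lemma c22E : c22 Q1 Q2 = #|comps|.
Proof.
rewrite /c22; congr #|pred_of_set _|; apply/setP => K; rewrite inE andb_idr // => _.
apply/forall_inP => x _.
have H (Q : {set {set W}}) : perfect_matching Q -> [set c in Q | x \in c] = [set pblock Q x].
  move=> HQ; apply/setP => c; rewrite !inE; apply/andP/eqP => [[cQ xc]|->].
    by rewrite (pm_def HQ cQ xc).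
  by rewrite pm_pblock_in // pm_mem_pblock.
by rewrite (H _ HQ2) (H _ HQ1) !cards1.
Qed.

Lemma comps_gt0 (x : W) : (0 < #|comps|)%N.
Proof. by apply/card_gt0P; exists (cls x); apply: imset_f. Qed.

End Coloring.

End Part12.
Import Part12.
Module Part34.
Set Implicit Arguments. Unset Strict Implicit. Unset Printing Implicit Defensive.
Local Open Scope ring_scope.

Fixpoint seg (ks : seq nat) (t : nat) : nat :=
  match ks with
  | [::] => 0
  | k :: ks' => if (t < k)%N then 0 else (seg ks' (t - k)).+1
  end.

Definition offs (ks : seq nat) (j : nat) : nat := sumn (take j ks).

Section BlockDiag.
Variable R : comNzRingType.

Lemma det_blockdiag (ks : seq nat) (f : nat -> nat -> R) :
  (forall t t', (t < sumn ks)%N -> (t' < sumn ks)%N -> seg ks t != seg ks t' -> f t t' = 0) ->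
  \det (\matrix_(i, j < sumn ks) f i j) =
  \prod_(j < size ks) \det (\matrix_(i, i' < nth 0%N ks j) f (offs ks j + i)%N (offs ks j + i')%N).
Proof.
elim: ks f => [|k ks IH] f Hf /=.
  by rewrite big_ord0 det_mx00.
set M := \matrix_(i, j < k + sumn ks) f i j.
rewrite -[M]submxK.
have -> : dlsubmx M = 0.
  apply/matrixP => i j; rewrite !mxE /=.
  apply: Hf; rewrite ?ltn_add2l // ?(leq_trans (ltn_ord j)) ?leq_addr //.
  by rewrite /= ltnNge leq_addr /= addKn (ltn_ord j).
rewrite det_ublock big_ord_recl; congr (_ * _).
  by congr (\det _); apply/matrixP => i j; rewrite !mxE /=.
have -> : drsubmx M = \matrix_(i, j < sumn ks) f (k + i)%N (k + j)%N.
  by apply/matrixP => i j; rewrite !mxE.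
rewrite (IH (fun i j => f (k + i) (k + j))%N); last first.
  move=> t t' ht ht' hs; apply: Hf; rewrite ?ltn_add2l //.
  by rewrite /= !ltnNge !leq_addr /= !addKn eqSS.
apply: eq_bigr => j _; congr (\det _); apply/matrixP => i i'; rewrite !mxE /=.
by rewrite /offs /= !addnA.
Qed.

Lemma det_blockdiag_n n (ks : seq nat) (f : nat -> nat -> R) : n = sumn ks ->
  (forall t t', (t < sumn ks)%N -> (t' < sumn ks)%N -> seg ks t != seg ks t' -> f t t' = 0) ->
  \det (\matrix_(i, j < n) f i j) =
  \prod_(0 <= j < size ks) \det (\matrix_(i, i' < nth 0%N ks j) f (offs ks j + i)%N (offs ks j + i')%N).
Proof. by move=> -> H; rewrite det_blockdiag // big_mkord. Qed.

Lemma det_eqsize n1 n2 (f : nat -> nat -> R) : n1 = n2 ->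
  \det (\matrix_(i, j < n1) f i j) = \det (\matrix_(i, j < n2) f i j).
Proof. by move=> ->. Qed.

End BlockDiag.

Lemma perm_groups (T : eqType) (s : seq T) (g : T -> nat) m : all (fun x => g x < m)%N s ->
  perm_eq (flatten [seq [seq x <- s | g x == j] | j <- iota 0 m]) s.
Proof.
move=> /allP Hs; apply/seq.permP => p.
rewrite count_flatten sumnE !big_map -sum1_count.
under eq_bigr => j _ do rewrite count_filter -sum1_count big_mkcond.
rewrite exchange_big /= [RHS]big_mkcond; apply: eq_big_seq => x xs /=.
case: (p x) => /=; last by rewrite big1.
have -> : \sum_(j <- iota 0 m) (if g x == j then 1 else 0)%N = count (pred1 (g x)) (iota 0 m).
  by rewrite -sum1_count [RHS]big_mkcond; apply: eq_bigr => j _ /=; rewrite eq_sym.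
by rewrite count_uniq_mem ?iota_uniq // mem_iota add0n Hs.
Qed.

Lemma seq_sign_perm (R : nzRingType) n (s : seq 'I_n) (sg : 'S_n) :
  (forall i : 'I_n, nth i s i = sg i) -> seq_sign R s = (-1) ^+ sg.
Proof.
move=> H; rewrite /seq_sign; case: pickP => [sg' /forallP H'|H'].
  suff -> : sg' = sg by [].
  by apply/permP => i; rewrite -H; apply/esym/eqP/H'.
by have := H' sg; move/negbT/negP; case; apply/forallP => i; rewrite H.
Qed.

Lemma seq_perm_ex n (s : seq 'I_n) : perm_eq s (enum 'I_n) ->
  {sg : 'S_n | forall i : 'I_n, nth i s i = sg i}.
Proof.
move=> ps.
have sz : size s = n by rewrite (perm_size ps) size_enum_ord.
have us : uniq s by rewrite (perm_uniq ps) enum_uniq.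
have inj : injective (fun i : 'I_n => nth i s i).
  move=> i j /eqP; rewrite (set_nth_default j) ?sz // nth_uniq ?sz //.
  by move/eqP/val_inj.
by exists (perm inj) => i; rewrite permE.
Qed.

Lemma nth_flatten_off (T : Type) (x0 : T) (ss : seq (seq T)) j i :
  (j < size ss)%N -> (i < size (nth [::] ss j))%N ->
  nth x0 (flatten ss) (offs (shape ss) j + i) = nth x0 (nth [::] ss j) i.
Proof.
elim: ss j => [|s ss IH] [|j] Hj Hi //=.
  by rewrite /offs /= add0n nth_cat Hi.
rewrite /offs /= -addnA nth_cat ltnNge leq_addr /= addKn.
exact: (IH j Hj Hi).
Qed.

Lemma nth_flatten_seg (T : eqType) (x0 : T) (ss : seq (seq T)) t :
  (t < size (flatten ss))%N ->
  (seg (shape ss) t < size ss)%N && (nth x0 (flatten ss) t \in nth [::] ss (seg (shape ss) t)).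
Proof.
elim: ss t => [|s ss IH] t //= Ht.
rewrite nth_cat; case: (ltnP t (size s)) => Hts /=; first by rewrite mem_nth.
apply: IH; move: Ht; rewrite size_cat; lia.
Qed.

Lemma signrKK (R : nzRingType) (b c : bool) (x : R) :
  (-1) ^+ b * (-1) ^+ c * ((-1) ^+ b * (-1) ^+ c * x) = x.
Proof. by rewrite -signr_addb mulrA -signr_addb addbb expr0 mul1r. Qed.

Section GL.
Variables (R : comNzRingType) (n m : nat) (d : 'I_n) (gr gc : 'I_n -> nat).
Hypotheses (Hgr : forall k, (gr k < m)%N) (Hgc : forall k, (gc k < m)%N).
Definition grp (g : 'I_n -> nat) (j : nat) := [seq k <- enum 'I_n | g k == j].
Hypothesis Hsz : forall j, size (grp gr j) = size (grp gc j).
Variable Z : 'M[R]_n.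
Hypothesis HZ : forall k l, gr k != gc l -> Z k l = 0.

Let rs := [seq grp gr j | j <- iota 0 m].
Let cs := [seq grp gc j | j <- iota 0 m].

Lemma GL : \det Z = seq_sign R (flatten rs) * seq_sign R (flatten cs) *
  \prod_(j < m) \det (\matrix_(i, i' < size (grp gr j)) Z (nth d (grp gr j) i) (nth d (grp gc j) i')).
Proof.
have pr : perm_eq (flatten rs) (enum 'I_n) by apply: perm_groups; apply/allP => k _.
have pc : perm_eq (flatten cs) (enum 'I_n) by apply: perm_groups; apply/allP => k _.
have [sr Hsr] := seq_perm_ex pr.
have [sc Hsc] := seq_perm_ex pc.
rewrite (seq_sign_perm R Hsr) (seq_sign_perm R Hsc).
have szr : size (flatten rs) = n by rewrite (perm_size pr) size_enum_ord.
have szc : size (flatten cs) = n by rewrite (perm_size pc) size_enum_ord.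
have shp : shape cs = shape rs.
  by rewrite /shape -!map_comp; apply: eq_map => j /=; rewrite Hsz.
set Z' := \matrix_(i, j < n) Z (nth d (flatten rs) i) (nth d (flatten cs) j).
have EZ : \det Z' = (-1) ^+ sr * (-1) ^+ sc * \det Z.
  have -> : Z' = row_perm sr (col_perm sc Z).
    apply/matrixP => i j; rewrite !mxE -Hsr -Hsc.
    by rewrite (set_nth_default i d) ?szr // (set_nth_default j d) ?szc.
  rewrite row_permE col_permE !det_mulmx !det_perm odd_permV.
  by rewrite (mulrC (\det Z)) mulrA.
rewrite -[\det Z](signrKK (odd_perm sr) (odd_perm sc)) -EZ; congr (_ * _).
rewrite /Z' (@det_blockdiag_n _ n (shape rs) (fun t t' => Z (nth d (flatten rs) t) (nth d (flatten cs) t'))); last first.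
- move=> t t' ht ht' hs; apply: HZ.
  have := nth_flatten_seg d (ss := rs) (t := t); rewrite size_flatten => /(_ ht) /andP[s1 m1].
  have := nth_flatten_seg d (ss := cs) (t := t'); rewrite size_flatten shp => /(_ ht') /andP[s2 m2].
  move: m1 m2.
  rewrite /rs /cs !size_map size_iota in s1 s2 *.
  rewrite !(nth_map 0%N) ?size_iota // !nth_iota // !add0n !mem_filter => /andP[/eqP -> _] /andP[/eqP -> _].
  exact: hs.
- by rewrite -size_flatten szr.
rewrite size_map /rs size_map size_iota big_mkord; apply: eq_bigr => j _.
have hj : (j < size rs)%N by rewrite /rs size_map size_iota.
have E1 : nth [::] rs j = grp gr j by rewrite /rs (nth_map 0%N) ?size_iota // nth_iota.
have E2 : nth [::] cs j = grp gc j by rewrite /cs (nth_map 0%N) ?size_iota // nth_iota.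
rewrite (nth_map [::]) // E1; congr (\det _); apply/matrixP => i i'; rewrite !mxE.
rewrite nth_flatten_off // ?E1 //; rewrite -shp nth_flatten_off ?E2 // -?Hsz //.
by rewrite /cs size_map size_iota.
Qed.

End GL.

Section Setup.
Variables (W : finType) (N : nat) (a b : 'I_N -> W) (E1 E2 : {set {set W}})
  (P : {set {set {set W}}}).
Hypotheses (HE1 : perfect_matching E1) (HE2 : perfect_matching E2)
  (Hab : E2 = [set [set a k; b k] | k : 'I_N])
  (Hab_inj : injective (fun k : 'I_N => [set a k; b k]))
  (HP : partition P E1) (HN : (0 < N)%N).

Local Notation e := (partner E2).

Lemma ab_in k : [set a k; b k] \in E2.
Proof. by rewrite Hab; apply/imsetP; exists k. Qed.

Lemma ab_neq k : a k != b k.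
Proof. by have := pm_card2 HE2 (ab_in k); rewrite cards2; case: (a k != b k). Qed.

Lemma ab_uniq k l x : x \in [set a k; b k] -> x \in [set a l; b l] -> k = l.
Proof.
move=> xk xl; apply: Hab_inj => /=.
by rewrite -(pm_def HE2 (ab_in k) xk) -(pm_def HE2 (ab_in l) xl).
Qed.

Lemma ab_ex x : exists k, x \in [set a k; b k].
Proof.
have : pblock E2 x \in [set [set a k; b k] | k : 'I_N] by rewrite -Hab pm_pblock_in.
case/imsetP => k _ E.
by exists k; rewrite -E pm_mem_pblock.
Qed.

Lemma e_a k : e (a k) = b k.
Proof.
have := partner_in HE2 (a k).
rewrite (pm_def HE2 (ab_in k)); last by rewrite !inE eqxx.
rewrite !inE => /orP[/eqP H|/eqP //].
by have := partner_neq HE2 (a k); rewrite H eqxx.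
Qed.

Lemma e_b k : e (b k) = a k.
Proof. by rewrite -e_a partnerK. Qed.

Definition pos (x : W) : 'I_N := odflt (Ordinal HN) [pick k | x \in [set a k; b k]].

Lemma pos_spec x : x \in [set a (pos x); b (pos x)].
Proof.
rewrite /pos; case: pickP => [k -> //|H].
by have [k xk] := ab_ex x; have := H k; rewrite xk.
Qed.

Lemma posE x k : x \in [set a k; b k] -> pos x = k.
Proof. by move=> xk; apply: ab_uniq (pos_spec x) xk. Qed.

Lemma pos_a k : pos (a k) = k. Proof. by apply: posE; rewrite !inE eqxx. Qed.
Lemma pos_b k : pos (b k) = k. Proof. by apply: posE; rewrite !inE eqxx orbT. Qed.

Section U.
Variable U : {set W}.
Hypothesis HU : [forall c in E2, #|c :&: U| == 1%N].

Local Notation uu := (uvert a b U).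
Local Notation vv := (vvert a b U).

Lemma HU' x : (x \in U) != (e x \in U).
Proof. by move: HU; rewrite (pm_okE HE2) => /forallP. Qed.

Lemma ab_xor k : (a k \in U) != (b k \in U).
Proof. by rewrite -e_a HU'. Qed.

Lemma uu_in k : uu k \in U.
Proof. by rewrite /uvert; case: ifP => // /negbT; have := ab_xor k; case: (b k \in U); case: (a k \in U). Qed.

Lemma vv_nin k : vv k \notin U.
Proof. by rewrite /vvert; case: ifP => //; have := ab_xor k; case: (b k \in U); case: (a k \in U). Qed.

Lemma uu_vv_neq k l : uu k != vv l.
Proof. by apply/eqP => E; have := uu_in k; rewrite E (negbTE (vv_nin l)). Qed.

Lemma uu_ab k : uu k \in [set a k; b k].
Proof. by rewrite /uvert; case: ifP; rewrite !inE eqxx ?orbT. Qed.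

Lemma vv_ab k : vv k \in [set a k; b k].
Proof. by rewrite /vvert; case: ifP; rewrite !inE eqxx ?orbT. Qed.

Lemma pos_uu k : pos (uu k) = k. Proof. exact: posE (uu_ab k). Qed.
Lemma pos_vv k : pos (vv k) = k. Proof. exact: posE (vv_ab k). Qed.

Lemma uu_inj : injective uu.
Proof. by move=> k l E; rewrite -(pos_uu k) E pos_uu. Qed.

Lemma vv_inj : injective vv.
Proof. by move=> k l E; rewrite -(pos_vv k) E pos_vv. Qed.

Lemma uu_pos x : x \in U -> uu (pos x) = x.
Proof.
move=> xU; have := pos_spec x; rewrite !inE => /orP[] /eqP E; rewrite /uvert.
  by rewrite -E xU.
have H := ab_xor (pos x); rewrite -E xU in H.
have Ha : (a (pos x) \in U) = false by move: H; case: (a _ \in U).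
by rewrite Ha -E.
Qed.

Lemma vv_pos x : x \notin U -> vv (pos x) = x.
Proof.
move=> xU; have := pos_spec x; rewrite !inE => /orP[] /eqP E; rewrite /vvert.
  by rewrite -E (negbTE xU).
have H := ab_xor (pos x); rewrite -E (negbTE xU) in H.
have Ha : (a (pos x) \in U) = true by move: H; case: (a _ \in U).
by rewrite Ha -E.
Qed.

Lemma e_uu k : e (uu k) = vv k.
Proof. by rewrite /uvert /vvert; case: ifP; rewrite ?e_a ?e_b. Qed.

Lemma card_U : #|U| = N.
Proof.
have -> : U = [set uu k | k : 'I_N].
  apply/setP => x; apply/idP/imsetP => [xU|[k _ ->]]; last exact: uu_in.
  by exists (pos x); rewrite ?uu_pos.
by rewrite card_imset ?card_ord //; apply: uu_inj.
Qed.

End U.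

Definition bl (x : W) : {set {set W}} := pblock P (pblock E1 x).

Lemma coverP_E1 : cover P = E1.
Proof. by case/and3P: HP => /eqP. Qed.

Lemma bl_in x : bl x \in P.
Proof. by apply: pblock_mem; rewrite coverP_E1 pm_pblock_in. Qed.

Lemma mem_cover_bl B x : B \in P -> (x \in cover B) = (bl x == B).
Proof.
move=> BP; have tP : trivIset P by case/and3P: HP.
apply/bigcupP/eqP => [[c cB xc]|<-].
  have cE1 : c \in E1 by rewrite -coverP_E1; apply/bigcupP; exists B.
  by rewrite /bl (pm_def HE1 cE1 xc) (def_pblock tP BP cB).
exists (pblock E1 x); last exact: pm_mem_pblock.
by rewrite /bl mem_pblock coverP_E1 pm_pblock_in.
Qed.

Definition within (M : {set {set W}}) := [forall c in M, [exists B in P, c \subset cover B]].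
Definition bip (U : {set W}) (M : {set {set W}}) := [forall c in M, #|c :&: U| == 1%N].
Definition validM (M : {set {set W}}) := perfect_matching M && within M.

Lemma card_imset_ker (I T1 T2 : finType) (i0 : I) (f : I -> T1) (g : I -> T2) (A : {pred I}) :
  (forall i j, (f i == f j) = (g i == g j)) -> #|f @: A| = #|g @: A|.
Proof.
move=> H.
pose h y := f (odflt i0 [pick i in A | g i == y]).
have hg i : i \in A -> h (g i) = f i.
  move=> iA; rewrite /h; case: pickP => [j /andP[_ /eqP E]|Hn] /=.
    by apply/eqP; rewrite H E.
  by have := Hn i; rewrite iA eqxx.
have -> : f @: A = h @: (g @: A).
  rewrite -imset_comp; apply/setP => y; apply/imsetP/imsetP => [[i iA ->]|[i iA ->]];
    by exists i; rewrite //= hg.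
apply: card_in_imset => y1 y2 /imsetP[i iA ->] /imsetP[j jA ->].
by rewrite !hg // => /eqP; rewrite H => /eqP.
Qed.

Section Det.
Variables (R : comNzRingType) (X : W -> W -> R).
Hypothesis HX : forall x y, X x y = X y x.

Definition chordX (c : {set W}) : R :=
  match [pick x in c] with
  | Some x => match [pick y in c :\ x] with Some y => X x y | None => 0 end
  | None => 0
  end.

Lemma chordX_pair x y : x != y -> chordX [set x; y] = X x y.
Proof.
move=> nxy; rewrite /chordX; case: pickP => [z|H]; last by have := H x; rewrite !inE eqxx.
rewrite !inE => /orP[] /eqP -> ; case: pickP => [w|H].
- by rewrite !inE => /andP[nwx /orP[]/eqP E]; [move: nwx; rewrite E eqxx | rewrite E].
- by have := H y; rewrite !inE eq_sym nxy eqxx orbT.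
- rewrite !inE => /andP[nwy /orP[]/eqP E]; last by move: nwy; rewrite E eqxx.
  by rewrite E HX.
- by have := H x; rewrite !inE nxy eqxx.
Qed.

Variable U : {set W}.
Hypothesis HU : [forall c in E2, #|c :&: U| == 1%N].

Local Notation uu := (uvert a b U).
Local Notation vv := (vvert a b U).

Definition ZU : 'M[R]_N :=
  \matrix_(k, l) if bl (uu k) == bl (vv l) then X (uu k) (vv l) else 0.

Definition chord (s : 'S_N) (k : 'I_N) : {set W} := [set uu k; vv (s k)].
Definition Phi (s : 'S_N) : {set {set W}} := [set chord s k | k : 'I_N].
Definition br (s : 'S_N) := [forall k, bl (uu k) == bl (vv (s k))].

Lemma in_chord s k x : (x \in chord s k) = (x == uu k) || (x == vv (s k)).
Proof. by rewrite !inE. Qed.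

Lemma uu_chord s k l : (uu k \in chord s l) = (k == l).
Proof.
rewrite in_chord (negbTE (uu_vv_neq HU _ _)) orbF.
by apply/eqP/eqP => [/(@uu_inj U)|->].
Qed.

Lemma vv_chord s k l : (vv k \in chord s l) = (k == s l).
Proof.
rewrite in_chord eq_sym (negbTE (uu_vv_neq HU _ _)) /=.
by apply/eqP/eqP => [/(@vv_inj U)|->].
Qed.

Lemma chord_inj s : injective (chord s).
Proof. by move=> k l E; apply/eqP; rewrite -(uu_chord s) -E in_chord eqxx. Qed.

Lemma Phi_inj : injective Phi.
Proof.
move=> s1 s2 E; apply/permP => k.
have : chord s1 k \in Phi s2 by rewrite -E; apply: imset_f.
case/imsetP => l _ El.
have kl : k = l by apply/eqP; rewrite -(uu_chord s2) -El in_chord eqxx.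
subst l; apply/eqP; rewrite -(vv_chord s2) -El in_chord eqxx orbT //.
Qed.

Lemma Phi_pm s : perfect_matching (Phi s).
Proof.
apply/andP; split; last first.
  by apply/forall_inP => c /imsetP[k _ ->]; rewrite cards2 uu_vv_neq.
apply/and3P; split.
- apply/eqP/setP => x; rewrite inE; apply/bigcupP.
  case: (boolP (x \in U)) => xU.
    by exists (chord s (pos x)); [apply: imset_f | rewrite in_chord uu_pos ?eqxx].
  exists (chord s (s^-1 (pos x))%g); first by apply: imset_f.
  by rewrite in_chord permKV vv_pos ?eqxx ?orbT.
- apply/trivIsetP => A B /imsetP[k _ ->] /imsetP[l _ ->] nAB.
  have nkl : k != l by apply: contraNneq nAB => ->.
  rewrite -setI_eq0; apply/eqP/setP => z; rewrite in_setI in_set0 in_chord.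
  apply/negP => /andP[/orP[]/eqP -> ].
    by rewrite uu_chord (negbTE nkl).
  by rewrite vv_chord (inj_eq (@perm_inj _ s)) (negbTE nkl).
- apply/imsetP => -[k _ E].
  by have := uu_chord s k k; rewrite -E inE eqxx.
Qed.

Lemma Phi_within s : br s -> within (Phi s).
Proof.
move=> /forallP H; apply/forall_inP => c /imsetP[k _ ->].
apply/existsP; exists (bl (uu k)); rewrite bl_in /=.
apply/subsetP => z; rewrite in_chord => /orP[]/eqP ->; rewrite mem_cover_bl ?bl_in //.
by rewrite eq_sym; apply: H.
Qed.

Lemma Phi_bip s : bip U (Phi s).
Proof.
apply/forall_inP => c /imsetP[k _ ->].
by rewrite card_pairI1 ?uu_vv_neq // uu_in // (negbTE (vv_nin HU _)).
Qed.

Lemma Phi_surj M : validM M -> bip U M -> exists2 s, br s & M = Phi s.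
Proof.
case/andP => pM /forall_inP wM /forall_inP bM.
have bx x : (x \in U) != (partner M x \in U).
  by rewrite -card_pairI1 ?(eq_sym x) ?partner_neq // -(pblock_pair pM) bM ?pm_pblock_in.
have mU k : partner M (uu k) \notin U by have := bx (uu k); rewrite uu_in //; case: (_ \in U).
pose t k := pos (partner M (uu k)).
have vt k : vv (t k) = partner M (uu k) by rewrite vv_pos.
have tinj : injective t.
  move=> k l E; apply: (@uu_inj U); apply: (partner_inj pM).
  by rewrite -vt E vt.
exists (perm tinj).
  apply/forallP => k; rewrite permE vt.
  have := wM _ (pm_pblock_in pM (uu k)); case/existsP => B /andP[BP /subsetP sB].
  have h1 := sB _ (pm_mem_pblock pM (uu k)).
  have h2 := sB _ (partner_in pM (uu k)).
  rewrite mem_cover_bl // in h1; rewrite mem_cover_bl // in h2.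
  by rewrite (eqP h1) (eqP h2).
have chE k : chord (perm tinj) k = pblock M (uu k) by rewrite /chord permE vt pblock_pair.
apply/setP => c; apply/idP/imsetP => [cM|[k _ ->]]; last by rewrite chE pm_pblock_in.
have [x xc] : exists x, x \in c.
  by apply/set0Pn; rewrite -card_gt0 (pm_card2 pM cM).
case: (boolP (x \in U)) => xU.
  exists (pos x) => //; rewrite chE uu_pos //.
  by rewrite (pm_def pM cM xc).
have mxU : partner M x \in U by have := bx x; rewrite (negbTE xU); case: (_ \in U).
exists (pos (partner M x)) => //; rewrite chE uu_pos //.
by rewrite (pblock_partner pM) (pm_def pM cM xc).
Qed.

Lemma porbits_comps s : #|porbits s| = #|comps E2 (Phi s)|.
Proof.
set r := chord2_rel E2 (Phi s).
have rc c x y : c \in Phi s :|: E2 -> x \in c -> y \in c -> r x y.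
  by move=> cin xc yc; apply/existsP; exists c; rewrite cin xc yc.
have step k : connect r (a k) (a (s k)).
  apply: (@connect_trans _ _ (uu k)); first apply: connect1.
        by apply: (rc [set a k; b k]); [rewrite in_setU ab_in orbT | rewrite !inE eqxx | exact: uu_ab].
  apply: (@connect_trans _ _ (vv (s k))); first apply: connect1.
    by apply: (rc (chord s k)); [rewrite in_setU imset_f | rewrite in_chord eqxx | rewrite in_chord eqxx orbT].
  by apply: connect1; apply: (rc [set a (s k); b (s k)]); [rewrite in_setU ab_in orbT | exact: vv_ab | rewrite !inE eqxx].
have itc n k : connect r (a k) (a (iter n s k)).
  elim: n => [|n IH] /=; first exact: connect0.
  exact: connect_trans IH (step _).
have key i j : (porbit s i == porbit s j) = connect r (a i) (a j).
  apply/idP/idP.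
    rewrite eq_porbit_mem porbit_sym => /porbitP[n ->].
    by rewrite permX; apply: itc.
  pose C := [pred x | porbit s (pos x) == porbit s i].
  have cC : forall x y, r x y -> (x \in C) = (y \in C).
    move=> x y /existsP[c /andP[]]; rewrite inE => /orP[] cin /andP[xc yc]; rewrite !inE.
      case/imsetP: cin => k _ Ec; move: xc yc; rewrite Ec !in_chord.
      have ps : porbit s (s k) = porbit s k.
        by have := mem_porbit s 1 k; rewrite expg1 => H; apply/eqP; rewrite eq_porbit_mem.
      by case/orP => /eqP ->; case/orP => /eqP ->; rewrite ?pos_uu ?pos_vv ?ps.
    move: cin; rewrite Hab => /imsetP[k _ Ec]; move: xc yc; rewrite Ec => xc yc.
    by rewrite (posE xc) (posE yc).
  move/(closed_connect cC); rewrite !inE !pos_a eqxx => /esym/eqP.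
  by move=> ->.
have -> : comps E2 (Phi s) = [set cls E2 (Phi s) (a k) | k : 'I_N].
  apply/setP => K; apply/imsetP/imsetP => [[x _ ->]|[k _ ->]]; last by exists (a k).
  exists (pos x) => //; apply: cls_eq; apply: connect1.
  by apply: (rc [set a (pos x); b (pos x)]); [rewrite in_setU ab_in orbT | exact: pos_spec | rewrite !inE eqxx].
rewrite /porbits; apply: (card_imset_ker (Ordinal HN)) => i j.
by rewrite (@cls_eqP _ E2 (Phi s)) key.
Qed.

Lemma detZ : \det ZU =
  \sum_(M | validM M && bip U M) (-1) ^+ (N + #|comps E2 M|) * \prod_(c in M) chordX c.
Proof.
rewrite /determinant (bigID br) /= [X in _ + X]big1 ?addr0; last first.
  move=> s /forallPn[k nk]; rewrite (bigD1 k) //= mxE (negbTE nk) mul0r.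
  by rewrite mulr0.
have -> : \sum_(M | validM M && bip U M) (-1) ^+ (N + #|comps E2 M|) * \prod_(c in M) chordX c
  = \sum_(M in Phi @: [set s | br s]) (-1) ^+ (N + #|comps E2 M|) * \prod_(c in M) chordX c.
  apply: eq_bigl => M; apply/andP/imsetP => [[vM bM]|[s]].
    by have [s brs ->] := Phi_surj vM bM; exists s; rewrite ?inE.
  rewrite inE => brs ->; split; last exact: Phi_bip.
  by rewrite /validM Phi_pm Phi_within.
rewrite big_imset /=; last by move=> s1 s2 _ _; apply: Phi_inj.
apply: eq_big => [s|s brs]; first by rewrite inE.
rewrite /Phi big_imset /=; last by move=> k l _ _; apply: chord_inj.
rewrite -porbits_comps.
have -> : (-1) ^+ (N + #|porbits s|) = (-1) ^+ s :> R.
  by rewrite -signr_odd oddD /odd_perm card_ord.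
congr (_ * _); apply: eq_bigr => k _.
rewrite mxE (eqP (forallP brs k)) eqxx /chord chordX_pair //.
exact: uu_vv_neq.
Qed.

End Det.

Lemma size_filter_enum (T : finType) (p : pred T) : size [seq x <- enum T | p x] = #|[set x | p x]|.
Proof.
rewrite size_filter cardsE cardE /enum_mem -enumT /=.
by rewrite count_filter size_filter; apply: eq_count => x /=; rewrite /in_mem /= andbT.
Qed.

Lemma index_eqE (T : eqType) (x0 x : T) (s : seq T) j : uniq s -> x \in s -> (j < size s)%N ->
  (index x s == j) = (x == nth x0 s j).
Proof.
move=> us xs js; apply/eqP/eqP => [<-|->]; first by rewrite nth_index.
exact: index_uniq.
Qed.

Section Field.
Variables (R : fieldType) (X : W -> W -> R).
Hypothesis HX : forall x y, X x y = X y x.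
Variable d : 'I_N.
Variable U : {set W}.
Hypothesis HU : [forall c in E2, #|c :&: U| == 1%N].

Local Notation uu := (uvert a b U).
Local Notation vv := (vvert a b U).

Definition blockdet (B : {set {set W}}) : R :=
  \det (\matrix_(i, j < size (upos a b U B)) X (uu (nth d (upos a b U B) i)) (vv (nth d (vpos a b U B) j))).

Lemma upos_card B : B \in P -> size (upos a b U B) = #|[set k | bl (uu k) == B]|.
Proof.
move=> BP; rewrite /upos size_filter_enum; congr #|pred_of_set _|.
by apply/setP => k; rewrite !inE mem_cover_bl.
Qed.

Lemma vpos_card B : B \in P -> size (vpos a b U B) = #|[set k | bl (vv k) == B]|.
Proof.
move=> BP; rewrite /vpos size_filter_enum; congr #|pred_of_set _|.
by apply/setP => k; rewrite !inE mem_cover_bl.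
Qed.

Lemma lemA : (forall B, B \in P -> size (upos a b U B) = size (vpos a b U B)) ->
  seq_sign R (flatten [seq upos a b U B | B <- enum P]) *
  seq_sign R (flatten [seq vpos a b U B | B <- enum P]) *
  \prod_(B in P) blockdet B = \det (ZU X U).
Proof.
move=> Hs.
set m := #|P|.
have szP : size (enum P) = m by rewrite -cardE.
have uP : uniq (enum P) := enum_uniq _.
pose gr k := index (bl (uu k)) (enum P).
pose gc k := index (bl (vv k)) (enum P).
have blP x : bl x \in enum P by rewrite mem_enum bl_in.
have Hgr k : (gr k < m)%N by rewrite -szP index_mem.
have Hgc k : (gc k < m)%N by rewrite -szP index_mem.
have nthP j : (j < m)%N -> nth set0 (enum P) j \in P.
  by move=> jm; rewrite -mem_enum mem_nth ?szP.
have gru j : (j < m)%N -> grp gr j = upos a b U (nth set0 (enum P) j).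
  move=> jm; apply: eq_filter => k.
  by rewrite /gr (index_eqE set0) ?szP // mem_cover_bl ?nthP.
have gcv j : (j < m)%N -> grp gc j = vpos a b U (nth set0 (enum P) j).
  move=> jm; apply: eq_filter => k.
  by rewrite /gc (index_eqE set0) ?szP // mem_cover_bl ?nthP.
have grbig (g : 'I_N -> nat) j : (forall k, (g k < m)%N) -> (m <= j)%N -> grp g j = [::].
  move=> Hg jm; rewrite /grp; elim: (enum 'I_N) => //= k s ->; rewrite ifF //.
  by apply/negbTE; rewrite neq_ltn (leq_trans (Hg k) jm).
have Hsz j : size (grp gr j) = size (grp gc j).
  case: (ltnP j m) => jm; last by rewrite !grbig.
  by rewrite gru // gcv // Hs ?nthP.
have HZ k l : gr k != gc l -> ZU X U k l = 0.
  by rewrite mxE; case: ifP => // /eqP E; rewrite /gr /gc E eqxx.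
rewrite (@GL R N m d gr gc Hgr Hgc Hsz (ZU X U) HZ).
have Em (g : 'I_N -> nat) (f : {set {set W}} -> seq 'I_N) :
    (forall j, (j < m)%N -> grp g j = f (nth set0 (enum P) j)) ->
    [seq f B | B <- enum P] = [seq grp g j | j <- iota 0 m].
  move=> H; rewrite -{1}(mkseq_nth set0 (enum P)) szP /mkseq -map_comp.
  by apply/eq_in_map => j; rewrite mem_iota add0n => /andP[_ jm] /=; rewrite H.
rewrite (Em gr (upos a b U)) // (Em gc (vpos a b U)) //; congr (_ * _).
rewrite -big_enum (big_nth set0) szP big_mkord; apply: eq_bigr => j _.
rewrite /blockdet gru // gcv //; congr (\det _); apply/matrixP => i i'; rewrite !mxE.
set B := nth set0 (enum P) j.
have BP : B \in P by apply: nthP.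
have h1 : nth d (upos a b U B) i \in upos a b U B by rewrite mem_nth.
have h2 : nth d (vpos a b U B) i' \in vpos a b U B by rewrite mem_nth // -Hs.
rewrite mem_filter mem_cover_bl // in h1; rewrite mem_filter mem_cover_bl // in h2.
case/andP: h1 => /eqP -> _; case/andP: h2 => /eqP -> _.
by rewrite eqxx.
Qed.

Lemma sizes_match M : validM M -> bip U M ->
  forall B, B \in P -> size (upos a b U B) = size (vpos a b U B).
Proof.
case/andP => pM /forall_inP wM /forall_inP bM B BP.
rewrite upos_card // vpos_card //.
have bx x : (x \in U) != (partner M x \in U).
  by rewrite -card_pairI1 ?(eq_sym x) ?partner_neq // -(pblock_pair pM) bM ?pm_pblock_in.
have blm x : bl (partner M x) = bl x.
  have := wM _ (pm_pblock_in pM x); case/existsP => B' /andP[B'P /subsetP sB].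
  have h1 := sB _ (pm_mem_pblock pM x).
  have h2 := sB _ (partner_in pM x).
  rewrite mem_cover_bl // in h1; rewrite mem_cover_bl // in h2.
  by rewrite (eqP h1) (eqP h2).
have mU k : partner M (uu k) \notin U.
  by have := bx (uu k); rewrite uu_in //; case: (_ \in U).
have mV k : partner M (vv k) \in U.
  by have := bx (vv k); rewrite (negbTE (vv_nin HU k)); case: (_ \in U).
apply/eqP; rewrite eqn_leq; apply/andP; split.
  pose f k := pos (partner M (uu k)).
  have fE k : vv (f k) = partner M (uu k) by rewrite vv_pos.
  have finj : injective f.
    by move=> k l E; apply: (@uu_inj U); apply: (partner_inj pM); rewrite -!fE E.
  rewrite -(card_imset _ finj); apply: subset_leq_card; apply/subsetP => y /imsetP[k kB ->].
  by move: kB; rewrite !inE fE blm.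
pose g k := pos (partner M (vv k)).
have gE k : uu (g k) = partner M (vv k) by rewrite uu_pos.
have ginj : injective g.
  by move=> k l E; apply: (@vv_inj U); apply: (partner_inj pM); rewrite -!gE E.
rewrite -(card_imset _ ginj); apply: subset_leq_card; apply/subsetP => y /imsetP[k kB ->].
by move: kB; rewrite !inE gE blm.
Qed.

Lemma sum_upos : (\sum_(B in P) size (upos a b U B) = N)%N.
Proof.
rewrite (eq_bigr (fun B => \sum_(k : 'I_N | bl (uu k) == B) 1)%N); last first.
  by move=> B BP; rewrite upos_card // -sum1_card; apply: eq_bigl => k; rewrite inE.
rewrite (exchange_big_dep predT) //=.
transitivity (\sum_(k : 'I_N) 1)%N; last by rewrite sum1_card card_ord.
apply: eq_bigr => k _.
by rewrite (big_pred1 (bl (uu k))) // => B; rewrite /= eq_sym andb_idl // => /eqP ->; apply: bl_in.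
Qed.

Variable Psi : R.
Hypothesis HPsi : Psi != 0.

Lemma termU (F : {set {set W}} -> R) :
  (forall B, B \in P -> size (upos a b U B) = size (vpos a b U B) ->
     F B = Psi ^ (1 - (size (upos a b U B))%:Z) * blockdet B) ->
  sgnE a b R P U * \prod_(B in P) F B =
  Psi ^ ((#|P|)%:Z - N%:Z) *
  \sum_(M | validM M && bip U M) (-1) ^+ (N + #|comps E2 M|) * \prod_(c in M) chordX X c.
Proof.
move=> HF; rewrite /sgnE; case: ifP => [/forall_inP Hs|Hs]; last first.
  rewrite mul0r big1 ?mulr0 // => M /andP[vM bM].
  case/negP: Hs; apply/forall_inP => B BP; apply/eqP; exact: sizes_match vM bM B BP.
rewrite (eq_bigr _ (fun B BP => HF B BP (eqP (Hs B BP)))).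
rewrite big_split /= -(detZ HX HU) -(lemA); last by move=> B BP; apply/eqP/Hs.
rewrite -(big_morph (fun z : int => Psi ^ z) (fun x y => expfzDr x y HPsi) (expr0z Psi)).
have -> : (\sum_(B in P) (1 - (size (upos a b U B))%:Z) = (#|P|)%:Z - N%:Z)%R.
  rewrite sumrB sumr_const -[in RHS]sum_upos.
  by rewrite -(big_morph (fun n : nat => n%:Z) (fun x y => PoszD x y) (erefl 0%:Z)) natz.
by rewrite mulrCA mulrA.
Qed.

End Field.

Lemma okC (Q : {set {set W}}) (U : {set W}) : perfect_matching Q ->
  [forall c in Q, #|c :&: ~: U| == 1%N] = [forall c in Q, #|c :&: U| == 1%N].
Proof.
move=> HQ; rewrite !(pm_okE HQ); apply: eq_forallb => x.
by rewrite !inE; case: (x \in U); case: (partner Q x \in U).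
Qed.

Lemma P2_inv p : p \in P2 N E2 ->
  exists2 U, p = [set U; ~: U] & [forall c in E2, #|c :&: U| == 1%N].
Proof.
rewrite inE => /existsP[U /and4P[/eqP -> _ _ H]]; exists U => //.
Qed.

Lemma pair_U_mem p : p \in P2 N E2 -> pair_U p \in p.
Proof.
case/P2_inv => U -> _; rewrite /pair_U; case: pickP => [X -> //|H].
by have := H U; rewrite !inE eqxx.
Qed.

Lemma pairU_ok p : p \in P2 N E2 -> [forall c in E2, #|c :&: pair_U p| == 1%N].
Proof.
move=> pP; have := pair_U_mem pP; case/P2_inv: pP => U -> HU.
by rewrite !inE => /orP[]/eqP ->; rewrite ?okC.
Qed.

Lemma card_Uc U : [forall c in E2, #|c :&: U| == 1%N] -> #|~: U| = N.
Proof.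
move=> HU.
have -> : ~: U = [set vvert a b U k | k : 'I_N].
  apply/setP => x; rewrite inE; apply/idP/imsetP => [xU|[k _ ->]]; last exact: vv_nin.
  by exists (pos x); rewrite ?vv_pos.
by rewrite card_imset ?card_ord //; apply: vv_inj.
Qed.

Lemma P2_mem U : [forall c in E2, #|c :&: U| == 1%N] -> [set U; ~: U] \in P2 N E2.
Proof.
move=> HU; rewrite inE; apply/existsP; exists U.
by rewrite eqxx card_U // card_Uc // !eqxx HU.
Qed.

Section Count.
Variable M : {set {set W}}.
Hypothesis HM : perfect_matching M.

Lemma properbE U : properb E2 M U = [forall c in E2, #|c :&: U| == 1%N] && bip U M.
Proof. by rewrite /properb /bip (pm_okE HE2) (pm_okE HM). Qed.

Lemma properbC U : properb E2 M (~: U) = properb E2 M U.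
Proof. by rewrite !properbE /bip !okC. Qed.

Lemma card_pset :
  #|[set p in P2 N E2 | bip (pair_U p) M]| = (2 ^ (#|comps E2 M| - 1))%N.
Proof.
set w0 := a (Ordinal HN).
set good := [set U | properb E2 M U].
set H := [set U : {set W} | w0 \in U].
have Hc : #|good :\: H| = #|good :&: H|.
  have -> : good :\: H = (@setC W) @: (good :&: H).
    apply/setP => U; rewrite !inE; apply/andP/imsetP => [[nU gU]|[V]].
      exists (~: U); last by rewrite setCK.
      by rewrite !inE properbC gU nU.
    by rewrite !inE => /andP[gV wV] ->; rewrite properbC gV inE wV.
  by rewrite card_imset //; apply: setC_inj.
have Hg : #|good| = (2 * #|good :&: H|)%N by rewrite -(cardsID H good) Hc addnn -mul2n.
have Hp : [set p in P2 N E2 | bip (pair_U p) M] = (fun U => [set U; ~: U]) @: (good :&: H).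
  apply/setP => p; rewrite inE; apply/andP/imsetP => [[pP bp]|[U]].
    have pin := pair_U_mem pP; case/P2_inv: (pP) => U0 Ep HU0.
    have bU0 : bip U0 M.
      by move: pin bp; rewrite Ep !inE => /orP[]/eqP ->; rewrite // /bip okC.
    have gU0 : properb E2 M U0 by rewrite properbE HU0.
    case: (boolP (w0 \in U0)) => w0U.
      by exists U0; rewrite // !inE gU0.
    exists (~: U0); first by rewrite !inE properbC gU0 w0U.
    by rewrite Ep setCK setUC.
  move=> /setIP[gU wU] ->.
  move: gU; rewrite inE properbE => /andP[HU bU].
  split; first exact: P2_mem.
  have := pair_U_mem (P2_mem HU); rewrite !inE => /orP[]/eqP ->; rewrite // /bip okC //.
have Hi : #|[set p in P2 N E2 | bip (pair_U p) M]| = #|good :&: H|.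
  rewrite Hp card_in_imset // => U V; rewrite !inE => /andP[_ wU] /andP[_ wV] E.
  have : U \in [set V; ~: V] by rewrite -E !inE eqxx.
  rewrite !inE => /orP[]/eqP // UV.
  by move: wU; rewrite UV inE wV.
have := card_proper HE2 HM; rewrite -/good Hg Hi.
case: #|comps E2 M| => [|c] /=; first by move/eqP; rewrite muln_eq1.
rewrite expnS subn1 /=; move/eqP; rewrite eqn_mul2l /= => /eqP //.
Qed.

End Count.

End Setup.

End Part34.
Import Part34.
Unset Implicit Arguments.
Local Open Scope ring_scope.

Lemma scal (R : fieldType) (Ps x : R) (m N c : nat) : Ps != 0 -> (0 < N)%N -> (0 < c)%N ->
  Ps ^ (m%:Z - N%:Z) * ((-1) ^+ (N + c) * x *+ (2 ^ (c - 1))%N) =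
  (-1) ^ (1 - m%:Z) * (- Ps) ^ (m%:Z - N%:Z) * ((-2) ^ (c%:Z - 1) * x).
Proof.
move=> Hps; case: N => // n _; case: c => // c _.
set z := (m%:Z - n.+1%:Z).
have u1 : (-1 : R) \is a GRing.unit by rewrite unitrN1.
have uP : Ps \is a GRing.unit by rewrite unitfE.
rewrite -[- Ps]mulN1r (exprzMl _ u1 uP).
rewrite (mulrA ((-1) ^ (1 - m%:Z))) -(exprzDr u1).
have -> : (1 - m%:Z + z) = - n%:Z.
  by rewrite /z addrA subrK intS opprD addrA subrr add0r.
rewrite -exprz_inv invrN1.
have -> : (c.+1%:Z - 1) = c%:Z by rewrite -addn1 PoszD addrK.
rewrite -mulr_natr natrX -[- 2]mulN1r.
set pz := Ps ^ z.
rewrite /exprz /= subn1 /= addSn addnS !exprS exprD exprMn.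
ring.
Qed.

Theorem mainTheorem4
  (V E : finType) (src tgt : E -> V)
  (Hconn : connected_graph src tgt)
  (N : nat) (HN : betti1 src tgt = N) (HN1 : (1 <= N)%N)
  (R : fieldType) (alpha : E -> R) (HPsi : Psi src tgt alpha != 0)
  (W : finType) (HW : #|W| = (2 * N)%N)
  (lab : W -> E) (Hlab : injective lab)
  (E1 E2 : {set {set W}})
  (HE1 : perfect_matching E1) (HE2 : perfect_matching E2)
  (a b : 'I_N -> W)
  (Hab : E2 = [set [set a k; b k] | k : 'I_N])
  (Hab_inj : injective (fun k : 'I_N => [set a k; b k]))
  (P : {set {set {set W}}}) (HP : partition P E1) :
  \sum_(p in P2 N E2)
     sgnE a b R P (pair_U p) *
     \prod_(B in P)
        dodgson src tgt alpha
          [seq lab (uvert a b (pair_U p) k) | k <- upos a b (pair_U p) B]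
          [seq lab (vvert a b (pair_U p) k) | k <- vpos a b (pair_U p) B]
  =
  (-1) ^ (1 - (#|P|)%:Z) * (- Psi src tgt alpha) ^ ((#|P|)%:Z - N%:Z) *
  \sum_(M : {set {set W}} | perfect_matching M &&
                            [forall c in M, [exists B in P, c \subset cover B]])
     (-2) ^ ((c22 E2 M)%:Z - 1) *
     \prod_(c in M) chord_chi src tgt alpha lab c.
Proof.
have HN0 : (0 < N)%N := HN1.
pose X := fun x y : W => cyclepoly src tgt alpha (lab x) (lab y).
have HX : forall x y, X x y = X y x.
  move=> x y; rewrite /X /cyclepoly; apply: eq_bigr => C _.
  by congr (_ * _); rewrite mulrC.
set Ps := Psi src tgt alpha.
pose d := Ordinal HN0.
have HF p (pP : p \in P2 N E2) B (BP : B \in P)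
    (hs : size (upos a b (pair_U p) B) = size (vpos a b (pair_U p) B)) :
    dodgson src tgt alpha
          [seq lab (uvert a b (pair_U p) k) | k <- upos a b (pair_U p) B]
          [seq lab (vvert a b (pair_U p) k) | k <- vpos a b (pair_U p) B] =
    Ps ^ (1 - (size (upos a b (pair_U p) B))%:Z) * blockdet a b X d (pair_U p) B.
  rewrite /dodgson size_map; congr (_ * _); congr (\det _); apply/matrixP => i j; rewrite !mxE.
  have hi : (i < size (upos a b (pair_U p) B))%N := ltn_ord i.
  have hj : (j < size (vpos a b (pair_U p) B))%N by rewrite -hs.
  rewrite (nth_map (lab (a d))) ?size_map // (nth_map d) //.
  by rewrite (nth_map (lab (a d))) ?size_map // (nth_map d).
rewrite (eq_bigr (fun p => Ps ^ (#|P|%:Z - N%:Z) *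
   \sum_(M | validM P M && bip (pair_U p) M) (-1) ^+ (N + #|comps E2 M|) * \prod_(c in M) chordX X c));
  last first.
  move=> p pP.
  exact: (termU HE1 HE2 Hab Hab_inj HP HN0 HX (d := d) (pairU_ok HE2 pP) HPsi (HF p pP)).
rewrite -mulr_sumr (exchange_big_dep (validM P)) /=; last by move=> p M _ /andP[].
rewrite !mulr_sumr; apply: eq_big => [M //|M vM].
have pM : perfect_matching M by case/andP: vM.
rewrite (eq_bigl (fun p => p \in [set p in P2 N E2 | bip (pair_U p) M])); last first.
  by move=> p; rewrite inE vM.
rewrite sumr_const (card_pset HE2 Hab Hab_inj HN0 pM) (c22E HE2 pM).
have -> : \prod_(c in M) chord_chi src tgt alpha lab c = \prod_(c in M) chordX X c by [].
by apply: scal => //; apply: (@comps_gt0 _ E2 M (a d)).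
Qed.
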